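(* Let $Q=\{(x,y)\in\mathbb R^2: x,y>0\}$, identified with the interior $\{[x:y:1]:x,y>0\}$ of a triangle in ${\mathbb RP}^2$, with its Hilbert metric $d_Q(b,c)=|\log cr(a,b,c,d)|$. Then the Hilbert area form on $Q$ is $$\omega_Q=\frac{dx\,dy}{xy}.$$
   Context: Hilbert metric on a properly convex open set $\Omega$: for $b,c\in\Omega$ let the projective line through them meet $\partial\Omega$ at $a,d$ with $a,b,c,d$ in order; $d_\Omega(b,c)=|\log cr(a,b,c,d)|$ with $cr(y_1,y_2,y_3,y_4)=\frac{(y_1-y_3)(y_2-y_4)}{(y_1-y_2)(y_3-y_4)}$ (here without the factor $1/2$). This is a Finsler metric. The p-area of a 2-dimensional normed space $(V,\|\cdot\|)$ is $K^{-1}\lambda$ where $\lambda$ is Lebesgue measure from an inner product and $K$ is the supremum of $\lambda$-areas of parallelograms spanned by two vectors of norm $\le1$. The Hilbert area form is the p-area of the Hilbert Finsler norm on each tangent space. *)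

(* Defs.v *)
From HB Require Import structures.
From mathcomp Require Import all_boot all_order all_algebra.
From mathcomp Require Import all_classical all_reals all_analysis.
Set Implicit Arguments. Unset Strict Implicit. Unset Printing Implicit Defensive.
Import Order.TTheory GRing.Theory Num.Theory numFieldNormedType.Exports.
Local Open Scope classical_set_scope.
Local Open Scope ring_scope.

Section Hilbert.
Variable R : realType.

(* The affine chart {[x:y:1]} of RP^2 is identified with R^2 = R * R. *)

Definition line_params (Om : set (R * R)) (b c : R * R) : set R :=
  [set s : R | Om (b.1 + s * (c.1 - b.1), b.2 + s * (c.2 - b.2))].

(* Cross ratio cr(a,b,c,d) where, in the affine parameter s of the line
   b + s(c-b), one has b = 0, c = 1, a = s_- = inf, d = s_+ = sup.
   cr(a,b,c,d) = (a-c)(b-d)/((a-b)(c-d))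
               = ((1 - s_-)/(- s_-)) * (s_+/(s_+ - 1)).
   When the boundary point lies on the line at infinity (the parameter set
   is unbounded on that side), the corresponding factor is 1, which is the
   value of the projective cross ratio with that point at infinity. *)
Definition cr_plus (Om : set (R * R)) (b c : R * R) : R :=
  let S := line_params Om b c in
  if pselect (has_ubound S) then sup S / (sup S - 1) else 1.

Definition cr_minus (Om : set (R * R)) (b c : R * R) : R :=
  let S := line_params Om b c in
  if pselect (has_lbound S) then (1 - inf S) / (- inf S) else 1.

Definition hilbert_cr (Om : set (R * R)) (b c : R * R) : R :=
  cr_minus Om b c * cr_plus Om b c.

(* Hilbert metric d_Om(b,c) = |log cr(a,b,c,d)| (no factor 1/2). *)
Definition hilbert_dist (Om : set (R * R)) (b c : R * R) : R :=
  `| ln (hilbert_cr Om b c) |.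

Definition hilbert_norm (Om : set (R * R)) (p v : R * R) : R :=
  let f : R -> R :=
    fun t => hilbert_dist Om p (p.1 + t * v.1, p.2 + t * v.2) / t in
  lim (f @ at_right (0 : R)).

Definition hilbert_K (Om : set (R * R)) (p : R * R) : R :=
  sup [set r : R | exists u w : R * R,
         [/\ hilbert_norm Om p u <= 1, hilbert_norm Om p w <= 1 &
             r = `| u.1 * w.2 - u.2 * w.1 |] ].

(* The Hilbert area form at p is the p-area K^{-1} dx dy; this is its
   density with respect to Lebesgue measure dx dy. *)
Definition hilbert_area_density (Om : set (R * R)) (p : R * R) : R :=
  (hilbert_K Om p)^-1.

Definition quadrant : set (R * R) := [set p | 0 < p.1 /\ 0 < p.2].

End Hilbert.

(* Main.v *)
Require Import Defs.
From mathcomp Require Import all_boot all_order all_algebra.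
From mathcomp Require Import all_classical all_reals all_analysis.
From mathcomp Require Import ring lra.
Import Order.TTheory GRing.Theory Num.Theory numFieldNormedType.Exports.
Local Open Scope classical_set_scope.
Local Open Scope ring_scope.
Section S.
Variable R : realType.
Lemma sup_itv (S : set R) u : 0 < u -> (forall s, 0 <= s < u -> S s) ->
  (forall s, S s -> s < u) -> sup S = u.
Proof.
move=> u0 hin hout.
have S0 : S 0 by apply: hin; rewrite lexx u0.
have ub : ubound S u by move=> s /hout /ltW.
apply/eqP; rewrite eq_le; apply/andP; split.
  by apply: ge_sup => //; exists 0.
rewrite leNgt; apply/negP => hlt.
have hs : has_ubound S by exists u.
set m := Num.max (sup S) 0.
have : S ((m + u) / 2).
  apply: hin; apply/andP; split.
    have h : 0 <= m by rewrite le_max lexx orbT.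
    lra.
  have : m < u by rewrite /m gt_max hlt u0.
  lra.
move/(ub_le_sup hs).
have : m < u by rewrite /m gt_max hlt u0.
have : sup S <= m by rewrite le_max lexx.
lra.
Qed.
Lemma inf_itv (S : set R) l : l < 0 -> (forall s, l < s <= 0 -> S s) ->
  (forall s, S s -> l < s) -> inf S = l.
Proof.
move=> l0 hin hout; rewrite /inf (@sup_itv _ (- l)) ?opprK // ?oppr_gt0 //.
  move=> s /andP[s0 sl]; exists (- s); last by rewrite opprK.
  by apply: hin; rewrite ltrNr sl /= oppr_le0.
by move=> s [z /hout zl <-]; rewrite ltrN2.
Qed.

Definition Sab (a b : R) := [set s : R | 0 < 1 + s * a /\ 0 < 1 + s * b].

Lemma sup_Sab a b m : 0 < m -> - a <= m -> - b <= m -> (- a = m \/ - b = m) ->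
  has_ubound (Sab a b) /\ sup (Sab a b) = m^-1.
Proof.
move=> m0 am bm hm.
have mV : m * m^-1 = 1 by rewrite mulfV // gt_eqF.
have mV0 : 0 < m^-1 by rewrite invr_gt0.
have hout : forall s, Sab a b s -> s < m^-1.
  move=> s [h1 h2]; case: hm => hm; nra.
split; first by exists m^-1 => s /hout /ltW.
apply: sup_itv => // s /andP[s0 sm]; split; nra.
Qed.

Lemma inf_Sab a b m : 0 < m -> a <= m -> b <= m -> (a = m \/ b = m) ->
  has_lbound (Sab a b) /\ inf (Sab a b) = - m^-1.
Proof.
move=> m0 am bm hm.
have mV : m * m^-1 = 1 by rewrite mulfV // gt_eqF.
have mV0 : 0 < m^-1 by rewrite invr_gt0.
have hout : forall s, Sab a b s -> - m^-1 < s.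
  move=> s [h1 h2]; case: hm => hm; nra.
split; first by exists (- m^-1) => s /hout /ltW.
apply: inf_itv; first by rewrite oppr_lt0.
  move=> s /andP[s0 sm]; split; nra.
exact: hout.
Qed.

Lemma noub_Sab a b : 0 <= a -> 0 <= b -> ~ has_ubound (Sab a b).
Proof.
move=> a0 b0 [M hM].
have : Sab a b (Num.max M 0 + 1).
  have : 0 <= Num.max M 0 by rewrite le_max lexx orbT.
  split; nra.
move/hM; have : M <= Num.max M 0 by rewrite le_max lexx.
lra.
Qed.

Lemma nolb_Sab a b : a <= 0 -> b <= 0 -> ~ has_lbound (Sab a b).
Proof.
move=> a0 b0 [M hM].
have : Sab a b (Num.min M 0 - 1).
  have : Num.min M 0 <= 0 by rewrite ge_min lexx orbT.
  split; nra.
move/hM; have : Num.min M 0 <= M by rewrite ge_min lexx.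
lra.
Qed.
Definition crp a b := if pselect (has_ubound (Sab a b))
  then sup (Sab a b) / (sup (Sab a b) - 1) else 1.
Definition crm a b := if pselect (has_lbound (Sab a b))
  then (1 - inf (Sab a b)) / (- inf (Sab a b)) else 1.

Lemma max_cases (u v : R) : u <= Num.max u v /\ v <= Num.max u v /\
  (u = Num.max u v \/ v = Num.max u v).
Proof.
rewrite !le_max !lexx /= orbT.
split=> //; split=> //.
by have [h|h] := leP u v; [right|left].
Qed.

Lemma crp_val a b : Num.max 0 (Num.max (- a) (- b)) < 1 ->
  crp a b = (1 - Num.max 0 (Num.max (- a) (- b)))^-1.
Proof.
have [h1 [h2 h3]] := max_cases (- a) (- b).
set m := Num.max (- a) (- b) in h1 h2 h3 *.
rewrite /crp; have [m0|m0] := leP m 0.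
  move=> _; rewrite subr0 invr1.
  case: pselect => // hu; exfalso; apply: (noub_Sab _ _ _ _ hu); lra.
move=> m1.
have [hu hs] := @sup_Sab a b m m0 h1 h2 h3.
case: pselect => //= ?; rewrite hs.
have mn0 : m != 0 by rewrite gt_eqF.
have m1n : 1 - m != 0 by rewrite gt_eqF // subr_gt0.
have e : m^-1 - 1 = (1 - m) / m by field.
by rewrite e invf_div mulrA mulVf // mul1r.
Qed.

Lemma crm_val a b :
  crm a b = 1 + Num.max 0 (Num.max a b).
Proof.
have [h1 [h2 h3]] := max_cases a b.
set m := Num.max a b in h1 h2 h3 *.
rewrite /crm; have [m0|m0] := leP m 0.
  rewrite addr0.
  case: pselect => // hu; exfalso; apply: (nolb_Sab _ _ _ _ hu); lra.
have [hu hs] := @inf_Sab a b m m0 h1 h2 h3.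
case: pselect => //= ?; rewrite hs.
have mn0 : m != 0 by rewrite gt_eqF.
rewrite opprK /=; field; exact: mn0.
Qed.
Lemma lim_frac (c K : R) : (fun t : R => c / (1 + t * K)) @ (0:R)^'+ --> c.
Proof.
apply: cvg_at_right_filter.
have h : (fun t : R => c / (1 + t * K)) @ (0:R) --> c / (1 + 0 * K).
  apply: cvgM; first exact: cvg_cst.
  apply: cvgV; first by rewrite mul0r addr0 oner_neq0.
  apply: cvgD; first exact: cvg_cst.
  apply: cvgM; [exact: cvg_id | exact: cvg_cst].
by rewrite mul0r addr0 divr1 in h.
Qed.
Definition hnorm (a b : R) :=
  Num.max 0 (Num.max a b) + Num.max 0 (Num.max (- a) (- b)).

Lemma lp_eq (x y t v1 v2 : R) : 0 < x -> 0 < y ->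
  line_params (@quadrant R) (x, y) (x + t * v1, y + t * v2) =
  Sab (t * v1 / x) (t * v2 / y).
Proof.
move=> x0 y0.
have ex : forall s, x + s * (x + t * v1 - x) = x * (1 + s * (t * v1 / x)).
  by move=> s; field; rewrite gt_eqF.
have ey : forall s, y + s * (y + t * v2 - y) = y * (1 + s * (t * v2 / y)).
  by move=> s; field; rewrite gt_eqF.
rewrite /line_params /quadrant /Sab /=; apply/seteqP; split => s /=;
  rewrite ex ey !pmulr_rgt0 //.
Qed.

Lemma cr_eq (x y t v1 v2 : R) : 0 < x -> 0 < y ->
  hilbert_cr (@quadrant R) (x, y) (x + t * v1, y + t * v2) =
  crm (t * v1 / x) (t * v2 / y) * crp (t * v1 / x) (t * v2 / y).
Proof.
by move=> x0 y0; rewrite /hilbert_cr /cr_minus /cr_plus /crm /crp lp_eq.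
Qed.

Lemma dist_bounds (x y t v1 v2 P N : R) : 0 < x -> 0 < y -> 0 < t ->
  P = Num.max 0 (Num.max (v1 / x) (v2 / y)) ->
  N = Num.max 0 (Num.max (- (v1 / x)) (- (v2 / y))) -> t * N < 1 ->
  (P + N) / (1 + t * P) <=
    hilbert_dist (@quadrant R) (x, y) (x + t * v1, y + t * v2) / t <=
  (P + N) / (1 + t * - N).
Proof.
move=> x0 y0 t0 eP eN tN.
have P0 : 0 <= P by rewrite eP le_max lexx.
have N0 : 0 <= N by rewrite eN le_max lexx.
have eneg : forall z w : R, - (t * z / w) = t * - (z / w).
  by move=> z w; rewrite -mulrA mulrN.
rewrite /hilbert_dist cr_eq // crm_val crp_val; last first.
  by rewrite !eneg -[0](mulr0 t) -!maxr_pMr ?(ltW t0)// -eN.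
have -> : Num.max 0 (Num.max (t * v1 / x) (t * v2 / y)) = t * P.
  by rewrite -!mulrA -[0](mulr0 t) -!maxr_pMr ?(ltW t0)// -eP.
have -> : Num.max 0 (Num.max (- (t * v1 / x)) (- (t * v2 / y))) = t * N.
  by rewrite !eneg -[0](mulr0 t) -!maxr_pMr ?(ltW t0)// -eN.
set Q := (1 + t * P) / (1 - t * N).
have d1 : 0 < 1 + t * P by have := mulr_ge0 (ltW t0) P0; lra.
have d2 : 0 < 1 - t * N by lra.
have Q0 : 0 < Q by rewrite /Q divr_gt0.
have eQ1 : Q - 1 = t * ((P + N) / (1 - t * N)).
  by rewrite /Q; field; rewrite gt_eqF.
have eQ2 : 1 - Q^-1 = t * ((P + N) / (1 + t * P)).
  by rewrite /Q invf_div; field; rewrite gt_eqF.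
have hi : ln Q <= Q - 1.
  have := @le_ln1Dx R (Q - 1); rewrite [1 + _]addrC subrK; apply; lra.
have lo : 1 - Q^-1 <= ln Q.
  have := @le_ln1Dx R (Q^-1 - 1); rewrite [1 + _]addrC subrK lnV ?posrE //.
  have : 0 < Q^-1 by rewrite invr_gt0.
  move=> h1 h2; have h3 : -1 < Q^-1 - 1 by lra.
  have := h2 h3; lra.
have c0 : 0 <= (P + N) / (1 + t * P) by apply: divr_ge0; [apply: addr_ge0 | apply: ltW].
have L0 : 0 <= ln Q.
  have := mulr_ge0 (ltW t0) c0; lra.
rewrite ger0_norm // mulrN -/(_ - _).
rewrite ler_pdivlMr // ler_pdivrMr //.
rewrite ![_ * t]mulrC -eQ1 -eQ2 lo hi.
done.
Qed.
Lemma hnorm_eq (x y : R) (v : R * R) : 0 < x -> 0 < y ->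
  hilbert_norm (@quadrant R) (x, y) v = hnorm (v.1 / x) (v.2 / y).
Proof.
move=> x0 y0.
set P := Num.max 0 (Num.max (v.1 / x) (v.2 / y)).
set N := Num.max 0 (Num.max (- (v.1 / x)) (- (v.2 / y))).
have N0 : 0 <= N by rewrite le_max lexx.
have d0 : 0 < (N + 1)^-1 by rewrite invr_gt0; lra.
have dd : (N + 1) * (N + 1)^-1 = 1 by rewrite mulfV // gt_eqF //; lra.
rewrite /hilbert_norm /= /hnorm -/P -/N. apply: cvg_lim; first exact: norm_hausdorff.
apply: (squeeze_cvgr (f := fun t => (P + N) / (1 + t * P))
   (h := fun t => (P + N) / (1 + t * - N))); last 2 first.
- exact: lim_frac.
- exact: lim_frac.
near=> t.
have t0 : 0 < t by near: t; exact: nbhs_right_gt.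
have t1 : t < (N + 1)^-1 by near: t; exact: nbhs_right_lt.
apply: dist_bounds => //.
nra.
Unshelve. all: by end_near.
Qed.
Lemma hnorm_facts a b : hnorm a b <= 1 ->
  [/\ a <= 1, -1 <= a, b <= 1 & -1 <= b] /\ (a - b <= 1 /\ b - a <= 1).
Proof.
rewrite /hnorm.
have [h1 [h2 _]] := max_cases a b.
have [h3 [h4 _]] := max_cases (- a) (- b).
have h5 : 0 <= Num.max 0 (Num.max a b) by rewrite le_max lexx.
have h6 : Num.max a b <= Num.max 0 (Num.max a b) by rewrite le_max lexx orbT.
have h7 : 0 <= Num.max 0 (Num.max (-a) (-b)) by rewrite le_max lexx.
have h8 : Num.max (-a) (-b) <= Num.max 0 (Num.max (-a) (-b)) by rewrite le_max lexx orbT.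
move=> h; split; [split|split]; lra.
Qed.

Lemma det_bound a1 b1 a2 b2 : hnorm a1 b1 <= 1 -> hnorm a2 b2 <= 1 ->
  `|a1 * b2 - b1 * a2| <= 1.
Proof.
move=> /hnorm_facts [[h1 h2 h3 h4] [h5 h6]] /hnorm_facts [[k1 k2 k3 k4] [k5 k6]].
rewrite ler_norml; apply/andP; split;
  have [ha|ha] := leP 0 a1; have [hb|hb] := leP 0 b1; have [hab|hab] := leP a1 b1;
  nra.
Qed.
End S.

Theorem lemma2p4 (R : realType) (x y : R) (hx : 0 < x) (hy : 0 < y) :
  hilbert_area_density (@quadrant R) (x, y) = 1 / (x * y).
Proof.
rewrite /hilbert_area_density /hilbert_K.
set T := [set r : R | _].
have xy0 : 0 < x * y by rewrite mulr_gt0.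
have ub : ubound T (x * y).
  move=> r [u [w [hu hw ->]]].
  rewrite !hnorm_eq // in hu hw.
  have e : u.1 * w.2 - u.2 * w.1 =
      (x * y) * ((u.1 / x) * (w.2 / y) - (u.2 / y) * (w.1 / x)).
    by field; rewrite !gt_eqF.
  rewrite e normrM (gtr0_norm xy0).
  have := det_bound _ _ _ _ _ hu hw.
  move=> h; rewrite -[leRHS]mulr1; apply: ler_wpM2l => //; exact: ltW.
have Txy : T (x * y).
  exists (x, 0), (0, y); rewrite !hnorm_eq //=; split.
  - rewrite divff ?gt_eqF // mul0r /hnorm oppr0.
    have h1 : Num.max 0 (Num.max 1 0) <= 1 :> R by rewrite !ge_max ler01 lexx.
    have h2 : Num.max 0 (Num.max (-1) 0) <= 0 :> R by rewrite !ge_max lexx lerN10.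
    lra.
  - rewrite divff ?gt_eqF // mul0r /hnorm oppr0.
    have h1 : Num.max 0 (Num.max 0 1) <= 1 :> R by rewrite !ge_max ler01 lexx.
    have h2 : Num.max 0 (Num.max 0 (-1)) <= 0 :> R by rewrite !ge_max lexx lerN10.
    lra.
  - by rewrite mul0r subr0 gtr0_norm.
have -> : sup T = x * y.
  apply/eqP; rewrite eq_le; apply/andP; split.
    by apply: ge_sup => //; exists (x * y).
  by apply: ub_le_sup => //; exists (x * y).
by rewrite div1r.
Qed.
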